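(* Let $g_1,g_2$ be monic divisors of $x^m-1$, $h_i=\frac{x^m-1}{g_i}$, $v_1,v_2\in\mathcal{R}$ with $\gcd(v_1v_2-1,x^m-1)=1$, and let $\mathcal{C}$ be the QC code of length $2m$ generated by $(g_1,v_1g_1)$ and $(v_2g_2,g_2)$. (A) Over $\mathbb{F}_q$, $\mathcal{C}$ is Euclidean self-orthogonal iff $h_1\mid\overline{g_1}(1+v_1\overline{v_1})$, $h_1\mid\overline{g_2}(\overline{v_2}+v_1)$ and $h_2\mid\overline{g_2}(1+v_2\overline{v_2})$. (B) Over $\mathbb{F}_{q^2}$, $\mathcal{C}$ is Hermitian self-orthogonal iff $h_1^{[q]}\mid\overline{g_1}(1+v_1^{[q]}\overline{v_1})$, $h_1^{[q]}\mid\overline{g_2}(\overline{v_2}+v_1^{[q]})$ and $h_2^{[q]}\mid\overline{g_2}(v_2^{[q]}\overline{v_2}+1)$. (C) Over $\mathbb{F}_q$, $\mathcal{C}$ is symplectic self-orthogonal iff $h_1\mid\overline{g_1}(\overline{v_1}-v_1)$, $h_1\mid\overline{g_2}(1-\overline{v_2}v_1)$ and $h_2\mid\overline{g_2}(v_2-\overline{v_2})$.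
   Context: $q$ is a prime power; $\mathbb{F}$ is $\mathbb{F}_q$ or $\mathbb{F}_{q^2}$ as indicated; $\mathcal{R}=\mathbb{F}[x]/(x^m-1)$ with elements identified with representatives of degree $<m$; $[k]=(k_0,\dots,k_{m-1})$ for $k=\sum k_ix^i$; $\overline{k}(x)=k(x^{-1})\bmod(x^m-1)$; $k^{[q]}=\sum k_i^qx^i$. For $h\mid x^m-1$, ''$h\mid a$'' for $a\in\mathcal{R}$ means $h$ divides the representative of $a$. The QC code generated by $(u_{i1},u_{i2})$, $i=1,2$, is $\{([r_1u_{11}+r_2u_{21}],[r_1u_{12}+r_2u_{22}]):r_1,r_2\in\mathcal{R}\}\subseteq\mathbb{F}^{2m}$. Inner products: Euclidean $\sum u_iv_i$; Hermitian $\sum u_i^qv_i$ (over $\mathbb{F}_{q^2}$); symplectic on $\mathbb{F}^{2m}$: $\sum_{i=1}^m(u_iv_{m+i}-u_{m+i}v_i)$. Self-orthogonal means $\mathcal{C}\subseteq\mathcal{C}^\perp$. *)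

(* Defs.v *)
From HB Require Import structures.
From mathcomp Require Import all_boot all_order all_algebra.
Set Implicit Arguments. Unset Strict Implicit. Unset Printing Implicit Defensive.
Import GRing.Theory.
Local Open Scope ring_scope.

Section QC.
Variable F : fieldType.

Definition xm1 (m : nat) : {poly F} := 'X^m - 1.

Definition rep (m : nat) (k : {poly F}) : {poly F} := k %% xm1 m.

Definition vec (m : nat) (k : {poly F}) : 'rV[F]_m := \row_(i < m) (rep m k)`_i.

(* \overline{k}(x) = k(x^{-1}) mod (x^m - 1) = sum_i k_i x^{(m-i) mod m} *)
Definition rbar (m : nat) (k : {poly F}) : {poly F} :=
  \sum_(i < m) (rep m k)`_i *: 'X^((m - i) %% m).

Definition frobq (q : nat) (k : {poly F}) : {poly F} := map_poly (fun a => a ^+ q) k.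

Definition rdvd (m : nat) (h a : {poly F}) : bool := h %| rep m a.

Definition word (m : nat) := ('rV[F]_m * 'rV[F]_m)%type.

Definition qc_code (m : nat) (u11 u12 u21 u22 : {poly F}) : word m -> Prop :=
  fun c => exists r1 r2 : {poly F}, (size r1 <= m)%N /\ (size r2 <= m)%N /\
    c = (vec m (r1 * u11 + r2 * u21), vec m (r1 * u12 + r2 * u22)).

(* inner products on F^{2m}, a word being (first m coords, last m coords) *)
Definition euclid_ip (m : nat) (u v : word m) : F :=
  \sum_(i < m) u.1 0 i * v.1 0 i + \sum_(i < m) u.2 0 i * v.2 0 i.

Definition herm_ip (q m : nat) (u v : word m) : F :=
  \sum_(i < m) u.1 0 i ^+ q * v.1 0 i + \sum_(i < m) u.2 0 i ^+ q * v.2 0 i.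

Definition symp_ip (m : nat) (u v : word m) : F :=
  \sum_(i < m) (u.1 0 i * v.2 0 i - u.2 0 i * v.1 0 i).

Definition dual (m : nat) (ip : word m -> word m -> F) (C : word m -> Prop) : word m -> Prop :=
  fun v => forall u, C u -> ip u v = 0.

Definition self_orthogonal (m : nat) (ip : word m -> word m -> F) (C : word m -> Prop) : Prop :=
  forall c, C c -> dual ip C c.

End QC.

Arguments rep {F} m k.
Arguments vec {F} m k.
Arguments rbar {F} m k.
Arguments frobq {F} q k.
Arguments rdvd {F} m h a.
Arguments qc_code {F} m u11 u12 u21 u22 _.
Arguments euclid_ip {F} m u v.
Arguments herm_ip {F} q m u v.
Arguments symp_ip {F} m u v.
Arguments dual {F} m ip C v.
Arguments self_orthogonal {F} m ip C.

(* Main.v *)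
Require Import Defs.
From HB Require Import structures.
From mathcomp Require Import all_boot all_order all_algebra all_field all_fingroup all_solvable.
From mathcomp Require Import ring.
Import GRing.Theory.
Local Open Scope ring_scope.
Set Implicit Arguments. Unset Strict Implicit. Unset Printing Implicit Defensive.

Lemma xm1_monic (F : fieldType) m : (0 < m)%N -> xm1 F m \is monic.
Proof. by move=> m0; rewrite /xm1 monicXnsubC. Qed.

Lemma size_xm1 (F : fieldType) m : (0 < m)%N -> size (xm1 F m) = m.+1.
Proof. by move=> m0; rewrite /xm1 size_XnsubC. Qed.

Lemma mk_monic_xm1 (F : fieldType) m : (0 < m)%N -> mk_monic (xm1 F m) = xm1 F m.
Proof. by move=> m0; rewrite /mk_monic size_xm1 // ltnS m0 xm1_monic. Qed.

Definition pi (F : fieldType) m (p : {poly F}) : {poly %/ xm1 F m} := in_qpoly (xm1 F m) p.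

Lemma piE (F : fieldType) m p : (0 < m)%N -> (pi m p : {poly F}) = rep m p.
Proof.
move=> m0; rewrite /pi /in_qpoly /= mk_monic_xm1 // /rep.
by rewrite Pdiv.IdomainMonic.modpE ?xm1_monic.
Qed.

Lemma pi_val (F : fieldType) m (z : {poly %/ xm1 F m}) : (0 < m)%N -> pi m (z : {poly F}) = z.
Proof.
move=> m0; apply: val_inj; rewrite [val _]piE // /rep modp_small //.
have -> : size (xm1 F m) = size (mk_monic (xm1 F m)) by rewrite mk_monic_xm1.
exact: size_mk_monic.
Qed.

Lemma size_qval (F : fieldType) m (z : {poly %/ xm1 F m}) : (0 < m)%N -> (size (z : {poly F}) <= m)%N.
Proof.
move=> m0; rewrite -ltnS -(size_xm1 F m0).
have -> : size (xm1 F m) = size (mk_monic (xm1 F m)) by rewrite mk_monic_xm1.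
exact: size_mk_monic.
Qed.

Lemma piD (F : fieldType) m (p q : {poly F}) : pi m (p + q) = pi m p + pi m q.
Proof. exact: in_qpolyD. Qed.
Lemma piM (F : fieldType) m (p q : {poly F}) : pi m (p * q) = pi m p * pi m q.
Proof. exact: in_qpolyM. Qed.
Lemma piZ (F : fieldType) m c (p : {poly F}) : pi m (c *: p) = c *: pi m p.
Proof. exact: in_qpolyZ. Qed.
Lemma pi1 (F : fieldType) m : pi m (1 : {poly F}) = 1.
Proof. exact: in_qpoly1. Qed.
Lemma pi0 (F : fieldType) m : pi m (0 : {poly F}) = 0.
Proof. exact: in_qpoly0. Qed.
Lemma piN (F : fieldType) m (p : {poly F}) : pi m (- p) = - pi m p.
Proof. by apply/eqP; rewrite -subr_eq0 opprK -piD addNr pi0. Qed.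
Lemma piB (F : fieldType) m (p q : {poly F}) : pi m (p - q) = pi m p - pi m q.
Proof. by rewrite piD piN. Qed.
Lemma piX (F : fieldType) m (p : {poly F}) n : pi m (p ^+ n) = pi m p ^+ n.
Proof. by elim: n => [|n IH]; rewrite ?pi1 // !exprS piM IH. Qed.

Lemma pi_xm1 (F : fieldType) m : (0 < m)%N -> pi m (xm1 F m) = 0.
Proof. by move=> m0; apply: val_inj; rewrite [val _]piE // /rep modpp. Qed.

Definition om (F : fieldType) m : {poly %/ xm1 F m} := pi m 'X.

Lemma om_m (F : fieldType) m : (0 < m)%N -> om F m ^+ m = 1.
Proof.
move=> m0; apply/eqP; rewrite -subr_eq0 /om -piX -pi1 -piB.
by apply/eqP; apply: pi_xm1.
Qed.

Lemma om_mod (F : fieldType) m i : (0 < m)%N -> om F m ^+ (i %% m) = om F m ^+ i.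
Proof. by move=> m0; apply: expr_mod; apply: om_m. Qed.

Lemma val_om (F : fieldType) m i : (i < m)%N -> (om F m ^+ i : {poly F}) = 'X^i.
Proof.
move=> im; have m0 : (0 < m)%N by apply: leq_ltn_trans im.
rewrite /om -piX piE // /rep modp_small // size_polyXn size_xm1 //.
Qed.

Lemma val_om_mod (F : fieldType) m i : (0 < m)%N -> (om F m ^+ i : {poly F}) = 'X^(i %% m).
Proof. by move=> m0; rewrite -om_mod // val_om // ltn_pmod. Qed.

Lemma pi_Xn (F : fieldType) m i : pi m ('X^i : {poly F}) = om F m ^+ i.
Proof. by rewrite piX. Qed.
Lemma rep_Xn (F : fieldType) m i : (0 < m)%N -> rep m ('X^i : {poly F}) = 'X^(i %% m).
Proof. by move=> m0; rewrite -piE // pi_Xn val_om_mod. Qed.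

Lemma repD (F : fieldType) m (p q : {poly F}) : rep m (p + q) = rep m p + rep m q.
Proof. by rewrite /rep modpD. Qed.
Lemma repZ (F : fieldType) m c (p : {poly F}) : rep m (c *: p) = c *: rep m p.
Proof. by rewrite /rep modpZl. Qed.

Lemma rbar_rep (F : fieldType) m (p : {poly F}) : rbar m (rep m p) = rbar m p.
Proof. by rewrite /rbar {1}/rep /rep modp_id. Qed.

Lemma rbarD (F : fieldType) m (p q : {poly F}) : rbar m (p + q) = rbar m p + rbar m q.
Proof.
rewrite /rbar -big_split /=; apply: eq_bigr => i _.
by rewrite repD coefD scalerDl.
Qed.

Lemma rbarZ (F : fieldType) m c (p : {poly F}) : rbar m (c *: p) = c *: rbar m p.
Proof.
rewrite /rbar scaler_sumr; apply: eq_bigr => i _.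
by rewrite repZ coefZ scalerA.
Qed.

Definition negm m i := ((m - i %% m) %% m)%N.

Lemma rbar_Xn (F : fieldType) m i : (0 < m)%N -> rbar m ('X^i : {poly F}) = 'X^(negm m i).
Proof.
move=> m0; rewrite /rbar rep_Xn //.
rewrite (bigD1 (Ordinal (ltn_pmod i m0))) //= coefXn eqxx scale1r big1 ?addr0 //.
move=> j /negbTE; rewrite coefXn.
have -> : (j == (i %% m)%N :> nat) = (j == Ordinal (ltn_pmod i m0)) by [].
by move=> ->; rewrite scale0r.
Qed.

Lemma negm_lt m i : (0 < m)%N -> (negm m i < m)%N.
Proof. by move=> m0; rewrite /negm ltn_pmod. Qed.

Lemma negm_add m i : (0 < m)%N -> ((i + negm m i) %% m = 0)%N.
Proof.
move=> m0; rewrite /negm modnDmr.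
have lt := ltn_pmod i m0.
rewrite {1}(divn_eq i m) -addnA subnKC ?(ltnW lt) //.
by rewrite modnDr modnMl.
Qed.

Lemma om_negm (F : fieldType) m i : (0 < m)%N -> om F m ^+ i * om F m ^+ (negm m i) = 1.
Proof. by move=> m0; rewrite -exprD -om_mod // negm_add. Qed.

Lemma inv_uniq (R : comNzRingType) (x y z : R) : x * y = 1 -> x * z = 1 -> y = z.
Proof. by move=> h1 h2; rewrite -[y]mulr1 -h2 mulrA (mulrC y) h1 mul1r. Qed.

Definition barQ (F : fieldType) m (z : {poly %/ xm1 F m}) : {poly %/ xm1 F m} :=
  pi m (rbar m (z : {poly F})).

Lemma barQ_pi (F : fieldType) m (p : {poly F}) : (0 < m)%N -> barQ (pi m p) = pi m (rbar m p).
Proof. by move=> m0; rewrite /barQ piE // rbar_rep. Qed.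

Lemma barQ_om (F : fieldType) m i : (0 < m)%N -> barQ (om F m ^+ i) = om F m ^+ (negm m i).
Proof. by move=> m0; rewrite -pi_Xn barQ_pi // rbar_Xn // pi_Xn. Qed.

Lemma barQD (F : fieldType) m (z w : {poly %/ xm1 F m}) : (0 < m)%N -> barQ (z + w) = barQ z + barQ w.
Proof.
move=> m0; rewrite -(pi_val z m0) -(pi_val w m0) -piD !barQ_pi // rbarD piD //.
Qed.

Lemma barQZ (F : fieldType) m c (z : {poly %/ xm1 F m}) : (0 < m)%N -> barQ (c *: z) = c *: barQ z.
Proof.
move=> m0; rewrite -(pi_val z m0) -piZ !barQ_pi // rbarZ piZ //.
Qed.

Lemma barQ0 (F : fieldType) m : (0 < m)%N -> barQ (0 : {poly %/ xm1 F m}) = 0.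
Proof. by move=> m0; apply: (@addrI _ (barQ (0 : {poly %/ xm1 F m}))); rewrite -barQD // !addr0. Qed.

Lemma barQN (F : fieldType) m (z : {poly %/ xm1 F m}) : (0 < m)%N -> barQ (- z) = - barQ z.
Proof. by move=> m0; rewrite -scaleN1r barQZ // scaleN1r. Qed.

Lemma lin0 (F : fieldType) (V : zmodType) (f : {poly F} -> V) :
  (forall p q, f (p + q) = f p + f q) -> (forall c i, f (c *: 'X^i) = 0) -> forall p, f p = 0.
Proof.
move=> fD fX p.
have f0 : f 0 = 0.
  by apply: (@addrI _ (f 0)); rewrite -fD !addr0.
rewrite -[p]coefK poly_def.
elim/big_rec: _ => [|i x _ IH]; first exact: f0.
by rewrite fD IH fX addr0.
Qed.

Lemma pi_scaleXn (F : fieldType) m c i : pi m (c *: 'X^i : {poly F}) = c *: om F m ^+ i.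
Proof. by rewrite piZ pi_Xn. Qed.

Lemma barQ1 (F : fieldType) m : (0 < m)%N -> barQ (1 : {poly %/ xm1 F m}) = 1.
Proof.
move=> m0; have := @barQ_om F m 0 m0.
by rewrite expr0 /negm mod0n subn0 modnn expr0.
Qed.

Lemma om_negmD (F : fieldType) m i j : (0 < m)%N ->
  om F m ^+ (negm m (i + j)) = om F m ^+ (negm m i) * om F m ^+ (negm m j).
Proof.
move=> m0; apply: (@inv_uniq _ (om F m ^+ (i + j))); first exact: om_negm.
rewrite exprD mulrACA !om_negm // mulr1 //.
Qed.

Lemma barQM (F : fieldType) m (z w : {poly %/ xm1 F m}) : (0 < m)%N ->
  barQ (z * w) = barQ z * barQ w.
Proof.
move=> m0; rewrite -(pi_val z m0) -(pi_val w m0).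
move: (z : {poly F}) (w : {poly F}) => a b; apply/eqP; rewrite -subr_eq0; apply/eqP.
move: a; apply: (@lin0 F _ (fun a => barQ (pi m a * pi m b) - barQ (pi m a) * barQ (pi m b))).
  by move=> p q; rewrite piD mulrDl !barQD // mulrDl; ring.
move=> c i; move: b.
apply: (@lin0 F _ (fun b => barQ (pi m (c *: 'X^i) * pi m b) - barQ (pi m (c *: 'X^i)) * barQ (pi m b))).
  by move=> p q; rewrite piD mulrDr !barQD // mulrDr; ring.
move=> d j; rewrite !pi_scaleXn -scalerAl -scalerAr scalerA -exprD.
rewrite !barQZ // !barQ_om // om_negmD // -scalerAl -scalerAr scalerA subrr //.
Qed.

Lemma barQK (F : fieldType) m (z : {poly %/ xm1 F m}) : (0 < m)%N -> barQ (barQ z) = z.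
Proof.
move=> m0; rewrite -(pi_val z m0); move: (z : {poly F}) => a.
apply/eqP; rewrite -subr_eq0; apply/eqP; move: a.
apply: (@lin0 F _ (fun a => barQ (barQ (pi m a)) - pi m a)).
  by move=> p q; rewrite piD !barQD //; ring.
move=> c i; rewrite pi_scaleXn !barQZ // !barQ_om //.
suff -> : om F m ^+ negm m (negm m i) = om F m ^+ i by rewrite subrr.
apply: (@inv_uniq _ (om F m ^+ negm m i)); first exact: om_negm.
by rewrite mulrC om_negm.
Qed.

Lemma negmK m j : (0 < m)%N -> negm m (negm m j) = (j %% m)%N.
Proof.
move=> m0; rewrite /negm modn_mod.
have lt := ltn_pmod j m0; move: (j %% m)%N lt => r lt.
case: (posnP r) => [->|r0].
  by rewrite subn0 modnn subn0 modnn.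
rewrite (modn_small (m := (m - r)%N)); last by rewrite ltn_subrL m0 r0.
by rewrite subKn ?(ltnW lt) // modn_small.
Qed.

Lemma negm_eq m e j : (0 < m)%N -> (((e + j) %% m)%N == 0%N) = (negm m e == (j %% m)%N).
Proof.
move=> m0; rewrite -(negm_add e m0) -/(modn _ _).
rewrite eqn_modDl eq_sym modn_small ?negm_lt //.
Qed.

Lemma qvalD (F : fieldType) m (x y : {poly %/ xm1 F m}) : ((x + y : {poly %/ xm1 F m}) : {poly F}) = (x : {poly F}) + y.
Proof. exact: poly_of_qpolyD. Qed.

Lemma qvalZ (F : fieldType) m c (x : {poly %/ xm1 F m}) : ((c *: x : {poly %/ xm1 F m}) : {poly F}) = c *: (x : {poly F}).
Proof. exact: poly_of_qpolyZ. Qed.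

Lemma shift0 (F : fieldType) m e (z : {poly %/ xm1 F m}) : (0 < m)%N ->
  ((om F m ^+ e * z : {poly %/ xm1 F m}) : {poly F})`_0 = (z : {poly F})`_(negm m e).
Proof.
move=> m0; rewrite -(pi_val z m0); move: (z : {poly F}) => a.
apply/eqP; rewrite -subr_eq0; apply/eqP; move: a.
apply: (@lin0 F _ (fun a => ((om F m ^+ e * pi m a : {poly %/ xm1 F m}) : {poly F})`_0 - (pi m a : {poly F})`_(negm m e))).
  by move=> p q; rewrite piD mulrDr !qvalD !coefD; ring.
move=> c j; rewrite pi_scaleXn -scalerAr -exprD !qvalZ !coefZ !val_om_mod // !coefXn.
by rewrite eq_sym negm_eq // subrr.
Qed.

Lemma L1 (F : fieldType) m (y z : {poly %/ xm1 F m}) : (0 < m)%N ->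
  \sum_(i < m) (y : {poly F})`_i * (z : {poly F})`_i = ((barQ y * z : {poly %/ xm1 F m}) : {poly F})`_0.
Proof.
move=> m0; rewrite -(pi_val y m0); move: (y : {poly F}) => a.
apply/eqP; rewrite -subr_eq0; apply/eqP; move: a.
apply: (@lin0 F _ (fun a => \sum_(i < m) (pi m a : {poly F})`_i * (z : {poly F})`_i - ((barQ (pi m a) * z : {poly %/ xm1 F m}) : {poly F})`_0)).
  move=> p q; rewrite piD barQD // mulrDl !qvalD coefD.
  rewrite (eq_bigr (fun i : 'I_m => (pi m p : {poly F})`_i * (z : {poly F})`_i + (pi m q : {poly F})`_i * (z : {poly F})`_i)).
    by rewrite big_split /=; ring.
  by move=> i _; rewrite ?qvalD coefD mulrDl.
move=> c j; rewrite pi_scaleXn barQZ // barQ_om // -scalerAl qvalZ coefZ shift0 // negmK //.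
rewrite (bigD1 (Ordinal (ltn_pmod j m0))) //= big1 ?addr0.
  by rewrite coefZ val_om_mod // coefXn eqxx mulr1 subrr.
move=> i /negbTE ne; rewrite coefZ val_om_mod // coefXn.
have -> : (i == (j %% m)%N :> nat) = (i == Ordinal (ltn_pmod j m0)) by [].
by rewrite ne mulr0 mul0r.
Qed.

Lemma qzero (F : fieldType) m (z : {poly %/ xm1 F m}) : (0 < m)%N ->
  (forall e, (e < m)%N -> ((om F m ^+ e * z : {poly %/ xm1 F m}) : {poly F})`_0 = 0) -> z = 0.
Proof.
move=> m0 H; apply: val_inj => /=; apply/polyP => k; rewrite coef0.
case: (ltnP k m) => km.
  have := H (negm m k) (negm_lt k m0); rewrite shift0 // negmK // modn_small //.
by rewrite nth_default // (leq_trans (size_qval z m0)).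
Qed.

Lemma gen_so (F : fieldType) m (ip : word F m -> word F m -> F)
  (tau : {poly %/ xm1 F m} -> {poly %/ xm1 F m})
  (Phi : {poly %/ xm1 F m} -> {poly %/ xm1 F m} -> {poly %/ xm1 F m} -> {poly %/ xm1 F m} -> {poly %/ xm1 F m})
  (u11 u12 u21 u22 : {poly F}) :
  (0 < m)%N -> tau 1 = 1 -> tau 0 = 0 ->
  (forall A B C D, ip (vec m A, vec m B) (vec m C, vec m D) =
     ((Phi (pi m A) (pi m B) (pi m C) (pi m D)) : {poly F})`_0) ->
  (forall r1 r2 s1 s2,
     Phi (r1 * pi m u11 + r2 * pi m u21) (r1 * pi m u12 + r2 * pi m u22)
         (s1 * pi m u11 + s2 * pi m u21) (s1 * pi m u12 + s2 * pi m u22) =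
     tau r1 * s1 * Phi (pi m u11) (pi m u12) (pi m u11) (pi m u12)
     + tau r1 * s2 * Phi (pi m u11) (pi m u12) (pi m u21) (pi m u22)
     + tau r2 * s1 * Phi (pi m u21) (pi m u22) (pi m u11) (pi m u12)
     + tau r2 * s2 * Phi (pi m u21) (pi m u22) (pi m u21) (pi m u22)) ->
  self_orthogonal m ip (qc_code m u11 u12 u21 u22) <->
  [/\ Phi (pi m u11) (pi m u12) (pi m u11) (pi m u12) = 0,
      Phi (pi m u11) (pi m u12) (pi m u21) (pi m u22) = 0,
      Phi (pi m u21) (pi m u22) (pi m u11) (pi m u12) = 0 &
      Phi (pi m u21) (pi m u22) (pi m u21) (pi m u22) = 0].
Proof.
move=> m0 t1 t0 Hip Hlin.
have key : forall r1 r2 s1 s2 : {poly F},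
  ip (vec m (r1 * u11 + r2 * u21), vec m (r1 * u12 + r2 * u22))
     (vec m (s1 * u11 + s2 * u21), vec m (s1 * u12 + s2 * u22)) =
  ((tau (pi m r1) * pi m s1 * Phi (pi m u11) (pi m u12) (pi m u11) (pi m u12)
     + tau (pi m r1) * pi m s2 * Phi (pi m u11) (pi m u12) (pi m u21) (pi m u22)
     + tau (pi m r2) * pi m s1 * Phi (pi m u21) (pi m u22) (pi m u11) (pi m u12)
     + tau (pi m r2) * pi m s2 * Phi (pi m u21) (pi m u22) (pi m u21) (pi m u22)) : {poly F})`_0.
  by move=> r1 r2 s1 s2; rewrite Hip !piD !piM Hlin.
split.
  move=> so.
  have H : forall r1 r2 s1 s2 : {poly F}, (size r1 <= m)%N -> (size r2 <= m)%N ->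
      (size s1 <= m)%N -> (size s2 <= m)%N ->
    ((tau (pi m r1) * pi m s1 * Phi (pi m u11) (pi m u12) (pi m u11) (pi m u12)
     + tau (pi m r1) * pi m s2 * Phi (pi m u11) (pi m u12) (pi m u21) (pi m u22)
     + tau (pi m r2) * pi m s1 * Phi (pi m u21) (pi m u22) (pi m u11) (pi m u12)
     + tau (pi m r2) * pi m s2 * Phi (pi m u21) (pi m u22) (pi m u21) (pi m u22)) : {poly F})`_0 = 0.
    move=> r1 r2 s1 s2 h1 h2 h3 h4; rewrite -key; apply: so; first by exists s1, s2.
    by exists r1, r2.
  have s1m : (size (1%R : {poly F}) <= m)%N by rewrite size_poly1.
  have s0m : (size (0%R : {poly F}) <= m)%N by rewrite size_poly0.
  have sXm : forall e, (e < m)%N -> (size ('X^e : {poly F}) <= m)%N by move=> e em; rewrite size_polyXn.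
  split; apply: qzero => // e em.
  have := H 1 0 ('X^e) 0 s1m s0m (sXm e em) s0m.
    by rewrite pi1 pi0 pi_Xn t1 t0 !(mul0r, mulr0, mul1r, addr0, add0r).
  have := H 1 0 0 ('X^e) s1m s0m s0m (sXm e em).
    by rewrite pi1 pi0 pi_Xn t1 t0 !(mul0r, mulr0, mul1r, addr0, add0r).
  have := H 0 1 ('X^e) 0 s0m s1m (sXm e em) s0m.
    by rewrite pi1 pi0 pi_Xn t1 t0 !(mul0r, mulr0, mul1r, addr0, add0r).
  have := H 0 1 0 ('X^e) s0m s1m s0m (sXm e em).
    by rewrite pi1 pi0 pi_Xn t1 t0 !(mul0r, mulr0, mul1r, addr0, add0r).
move=> [e11 e12 e21 e22] c [s1 [s2 [_ [_ ->]]]] u [r1 [r2 [_ [_ ->]]]].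
by rewrite key e11 e12 e21 e22 !mulr0 !addr0 coef0.
Qed.

Lemma pi_eq0 (F : fieldType) m (p : {poly F}) : (0 < m)%N -> (pi m p = 0) <-> (xm1 F m %| p).
Proof.
move=> m0; split.
  by move/(congr1 val); rewrite [val _]piE // => H; apply/modp_eq0P.
by move/modp_eq0P => H; apply: val_inj; rewrite [val _]piE.
Qed.

Lemma dvd_tr (F : fieldType) m (h g Y : {poly F}) : (0 < m)%N -> g != 0 -> h * g = xm1 F m ->
  rdvd m h Y <-> pi m (g * Y) = 0.
Proof.
move=> m0 gnz hg; rewrite pi_eq0 // /rdvd /rep -dvdp_mod; last by rewrite -hg dvdp_mulr.
by rewrite -(dvdp_mul2r h Y gnz) hg mulrC.
Qed.

Lemma dvd_tr1 (F : fieldType) m (g Y : {poly F}) : (0 < m)%N -> g \is monic -> g %| xm1 F m ->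
  rdvd m (xm1 F m %/ g) Y <-> pi m (g * Y) = 0.
Proof. by move=> m0 gm gd; apply: dvd_tr => //; [apply: monic_neq0 | apply: divpK]. Qed.

Lemma fin4 (R : zmodType) (P11 P12 P21 P22 : R) (c1 c2 c3 : Prop) :
  (c1 <-> P11 = 0) -> (c2 <-> P21 = 0) -> (c3 <-> P22 = 0) -> (P21 = 0 -> P12 = 0) ->
  ([/\ P11 = 0, P12 = 0, P21 = 0 & P22 = 0] <-> [/\ c1, c2 & c3]).
Proof. by move=> h1 h2 h3 h4; split; [case=> *; split; [apply/h1|apply/h2|apply/h3] | case=> /h1 ? /h2 ? /h3 ?; split => //; apply: h4]. Qed.

Lemma inj0 (R : zmodType) (k : R -> R) (x y : R) : k 0 = 0 -> (forall z, k (k z) = z) -> y = k x ->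
  (y = 0 <-> x = 0).
Proof.
move=> k0 kk ->; split; last by move=> ->.
by move=> H; rewrite -(kk x) H.
Qed.

Lemma qvalN (F : fieldType) m (x : {poly %/ xm1 F m}) : ((- x : {poly %/ xm1 F m}) : {poly F}) = - (x : {poly F}).
Proof. by rewrite -scaleN1r qvalZ scaleN1r. Qed.

Lemma vecE (F : fieldType) m (A : {poly F}) i : (0 < m)%N -> vec m A 0 i = (pi m A : {poly F})`_i.
Proof. by move=> m0; rewrite mxE piE. Qed.

Lemma partA (F : fieldType) (m : nat) (g1 g2 v1 v2 : {poly F}) :
    (0 < m)%N ->
    g1 \is monic -> g1 %| xm1 F m -> g2 \is monic -> g2 %| xm1 F m ->
    let h1 := xm1 F m %/ g1 in let h2 := xm1 F m %/ g2 in
    self_orthogonal m (euclid_ip m) (qc_code m g1 (v1 * g1) (v2 * g2) g2) <->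
    [/\ rdvd m h1 (rbar m g1 * (1 + v1 * rbar m v1)),
        rdvd m h1 (rbar m g2 * (rbar m v2 + v1)) &
        rdvd m h2 (rbar m g2 * (1 + v2 * rbar m v2))].
Proof.
move=> m0 g1m g1d g2m g2d h1 h2.
rewrite (@gen_so F m (euclid_ip m) (@barQ F m) (fun A B C D => barQ A * C + barQ B * D)) //.
- apply: fin4.
  + rewrite dvd_tr1 // /= !(piM, piD, pi1) -!barQ_pi //.
    apply: (@inj0 _ id) => //; rewrite (barQM _ _ m0); ring.
  + rewrite dvd_tr1 // /= !(piM, piD, pi1) -!barQ_pi //.
    apply: (@inj0 _ id) => //; rewrite (barQM _ _ m0); ring.
  + rewrite dvd_tr1 // /= !(piM, piD, pi1) -!barQ_pi //.
    apply: (@inj0 _ id) => //; rewrite (barQM _ _ m0); ring.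
  + rewrite /= => H; rewrite -[RHS](barQ0 F m0) -H /= !barQD // !barQM // !barQK //; ring.
- exact: barQ1.
- exact: barQ0.
- move=> A B C D; rewrite /euclid_ip; cbn [fst snd].
  under eq_bigr do rewrite !vecE //.
  under [X in _ + X]eq_bigr do rewrite !vecE //.
  by rewrite !L1 // qvalD coefD.
- move=> r1 r2 s1 s2; rewrite !barQD // !barQM //; ring.
Qed.

Lemma partC (F : fieldType) (m : nat) (g1 g2 v1 v2 : {poly F}) :
    (0 < m)%N ->
    g1 \is monic -> g1 %| xm1 F m -> g2 \is monic -> g2 %| xm1 F m ->
    let h1 := xm1 F m %/ g1 in let h2 := xm1 F m %/ g2 in
    self_orthogonal m (symp_ip m) (qc_code m g1 (v1 * g1) (v2 * g2) g2) <->
    [/\ rdvd m h1 (rbar m g1 * (rbar m v1 - v1)),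
        rdvd m h1 (rbar m g2 * (1 - rbar m v2 * v1)) &
        rdvd m h2 (rbar m g2 * (v2 - rbar m v2))].
Proof.
move=> m0 g1m g1d g2m g2d h1 h2.
rewrite (@gen_so F m (symp_ip m) (@barQ F m) (fun A B C D => barQ A * D - barQ B * C)) //.
- apply: fin4.
  + rewrite dvd_tr1 // /= !(piM, piD, piB, piN, pi1) -!barQ_pi //.
    apply: (@inj0 _ (fun z => - z)); [exact: oppr0 | exact: opprK |].
    rewrite !barQM //; ring.
  + rewrite dvd_tr1 // /= !(piM, piD, piB, piN, pi1) -!barQ_pi //.
    apply: (@inj0 _ (fun z => - z)); [exact: oppr0 | exact: opprK |].
    rewrite !barQM //; ring.
  + rewrite dvd_tr1 // /= !(piM, piD, piB, piN, pi1) -!barQ_pi //.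
    apply: (@inj0 _ (fun z => - z)); [exact: oppr0 | exact: opprK |].
    rewrite !barQM //; ring.
  + rewrite /= => H.
    have -> : barQ (pi m g1) * pi m g2 - barQ (pi m (v1 * g1)) * pi m (v2 * g2) =
       - barQ (barQ (pi m (v2 * g2)) * pi m (v1 * g1) - barQ (pi m g2) * pi m g1).
      by rewrite !piM barQD // barQN // !barQM // !barQK //; ring.
    by rewrite H barQ0 // oppr0.
- exact: barQ1.
- exact: barQ0.
- move=> A B C D; rewrite /symp_ip; cbn [fst snd].
  under eq_bigr do rewrite !vecE //.
  by rewrite sumrB !L1 // qvalD qvalN coefD coefN.
- move=> r1 r2 s1 s2; rewrite !barQD // !barQM //; ring.
Qed.

Definition finv (F : fieldType) (f : F -> F) :=
  [/\ forall a b, f (a + b) = f a + f b, forall a b, f (a * b) = f a * f b, f 1 = 1 & forall a, f (f a) = a].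

Lemma finv0 (F : fieldType) (f : F -> F) : finv f -> f 0 = 0.
Proof. by case=> fD _ _ _; apply: (@addrI _ (f 0)); rewrite -fD !addr0. Qed.

Lemma finvN (F : fieldType) (f : F -> F) a : finv f -> f (- a) = - f a.
Proof.
move=> hf; have f0 := finv0 hf; case: hf => fD _ _ _.
by apply: (@addrI _ (f a)); rewrite -fD !subrr.
Qed.

Lemma finv_sum (F : fieldType) (f : F -> F) I (r : seq I) (P : pred I) (E : I -> F) : finv f ->
  f (\sum_(i <- r | P i) E i) = \sum_(i <- r | P i) f (E i).
Proof.
move=> hf; have f0 := finv0 hf; case: hf => fD _ _ _.
by apply: (big_morph f fD f0).
Qed.

Lemma mcoef (F : fieldType) (f : F -> F) (p : {poly F}) i : finv f -> (map_poly f p)`_i = f p`_i.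
Proof. by move=> hf; rewrite coef_map_id0 // finv0. Qed.

Lemma mapD (F : fieldType) (f : F -> F) (p q : {poly F}) : finv f -> map_poly f (p + q) = map_poly f p + map_poly f q.
Proof. by move=> hf; apply/polyP => i; rewrite coefD !mcoef // coefD; case: hf. Qed.

Lemma mapN (F : fieldType) (f : F -> F) (p : {poly F}) : finv f -> map_poly f (- p) = - map_poly f p.
Proof. by move=> hf; apply/polyP => i; rewrite coefN !mcoef // coefN finvN. Qed.

Lemma mapM (F : fieldType) (f : F -> F) (p q : {poly F}) : finv f -> map_poly f (p * q) = map_poly f p * map_poly f q.
Proof.
move=> hf; apply/polyP => i; rewrite mcoef // !coefM finv_sum //.
by apply: eq_bigr => j _; rewrite !mcoef //; case: hf.
Qed.

Lemma mapXn (F : fieldType) (f : F -> F) n : finv f -> map_poly f ('X^n : {poly F}) = 'X^n.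
Proof.
move=> hf; apply/polyP => i; rewrite mcoef // !coefXn.
by case: (i == n); [case: hf | rewrite finv0].
Qed.

Lemma map1 (F : fieldType) (f : F -> F) : finv f -> map_poly f (1 : {poly F}) = 1.
Proof. by move=> hf; have := mapXn 0 hf; rewrite expr0. Qed.

Lemma mapZ (F : fieldType) (f : F -> F) c (p : {poly F}) : finv f -> map_poly f (c *: p) = f c *: map_poly f p.
Proof. by move=> hf; apply/polyP => i; rewrite coefZ !mcoef // coefZ; case: hf. Qed.

Lemma mapK (F : fieldType) (f : F -> F) (p : {poly F}) : finv f -> map_poly f (map_poly f p) = p.
Proof. by move=> hf; apply/polyP => i; rewrite !mcoef //; case: hf. Qed.

Lemma map_sum (F : fieldType) (f : F -> F) I (r : seq I) (P : pred I) (E : I -> {poly F}) : finv f ->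
  map_poly f (\sum_(i <- r | P i) E i) = \sum_(i <- r | P i) map_poly f (E i).
Proof.
move=> hf; have m0 : map_poly f 0 = 0 by apply/polyP => i; rewrite mcoef // !coef0 finv0.
by apply: (big_morph _ (fun p q => mapD p q hf) m0).
Qed.

Lemma map_xm1 (F : fieldType) (f : F -> F) m : finv f -> map_poly f (xm1 F m) = xm1 F m.
Proof. by move=> hf; rewrite /xm1 mapD // mapN // mapXn // map1. Qed.

Lemma map_rep (F : fieldType) (f : F -> F) m (p : {poly F}) : (0 < m)%N -> finv f ->
  rep m (map_poly f p) = map_poly f (rep m p).
Proof.
move=> m0 hf; rewrite /rep {1}(divp_eq p (xm1 F m)) mapD // mapM // map_xm1 //.
rewrite modp_addl_mul_small // size_map_inj_poly ?finv0 //; last first.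
  by move=> a b fab; case: hf => _ _ _ fK; rewrite -(fK a) fab fK.
by rewrite ltn_modp -size_poly_gt0 size_xm1.
Qed.

Lemma map_rbar (F : fieldType) (f : F -> F) m (p : {poly F}) : (0 < m)%N -> finv f ->
  rbar m (map_poly f p) = map_poly f (rbar m p).
Proof.
move=> m0 hf; rewrite /rbar map_sum //; apply: eq_bigr => i _.
by rewrite map_rep // mcoef // mapZ // mapXn.
Qed.

Definition sigQ (F : fieldType) (f : F -> F) m (z : {poly %/ xm1 F m}) : {poly %/ xm1 F m} :=
  pi m (map_poly f (z : {poly F})).

Lemma pi_rep (F : fieldType) m (p : {poly F}) : (0 < m)%N -> pi m (rep m p) = pi m p.
Proof. by move=> m0; rewrite -piE // pi_val. Qed.

Lemma sigQ_pi (F : fieldType) (f : F -> F) m (p : {poly F}) : (0 < m)%N -> finv f ->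
  sigQ f (pi m p) = pi m (map_poly f p).
Proof. by move=> m0 hf; rewrite /sigQ piE // -map_rep // pi_rep. Qed.

Lemma val_sigQ (F : fieldType) (f : F -> F) m (z : {poly %/ xm1 F m}) : (0 < m)%N -> finv f ->
  (sigQ f z : {poly F}) = map_poly f (z : {poly F}).
Proof.
move=> m0 hf; rewrite /sigQ piE // map_rep // -piE // pi_val //.
Qed.

Lemma sigQD (F : fieldType) (f : F -> F) m (z w : {poly %/ xm1 F m}) : (0 < m)%N -> finv f ->
  sigQ f (z + w) = sigQ f z + sigQ f w.
Proof. by move=> m0 hf; rewrite -(pi_val z m0) -(pi_val w m0) -piD !sigQ_pi // mapD // piD. Qed.

Lemma sigQM (F : fieldType) (f : F -> F) m (z w : {poly %/ xm1 F m}) : (0 < m)%N -> finv f ->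
  sigQ f (z * w) = sigQ f z * sigQ f w.
Proof. by move=> m0 hf; rewrite -(pi_val z m0) -(pi_val w m0) -piM !sigQ_pi // mapM // piM. Qed.

Lemma sigQ1 (F : fieldType) (f : F -> F) m : (0 < m)%N -> finv f -> sigQ f (1 : {poly %/ xm1 F m}) = 1.
Proof. by move=> m0 hf; rewrite -pi1 sigQ_pi // map1 // pi1. Qed.

Lemma sigQ0 (F : fieldType) (f : F -> F) m : (0 < m)%N -> finv f -> sigQ f (0 : {poly %/ xm1 F m}) = 0.
Proof. by move=> m0 hf; apply: (@addrI _ (sigQ f (0 : {poly %/ xm1 F m}))); rewrite -sigQD // !addr0. Qed.

Lemma sigQK (F : fieldType) (f : F -> F) m (z : {poly %/ xm1 F m}) : (0 < m)%N -> finv f ->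
  sigQ f (sigQ f z) = z.
Proof. by move=> m0 hf; rewrite -(pi_val z m0) !sigQ_pi // mapK. Qed.

Lemma barQ_sigQ (F : fieldType) (f : F -> F) m (z : {poly %/ xm1 F m}) : (0 < m)%N -> finv f ->
  barQ (sigQ f z) = sigQ f (barQ z).
Proof. by move=> m0 hf; rewrite -(pi_val z m0) sigQ_pi // !barQ_pi // sigQ_pi // map_rbar. Qed.

Lemma injQ (F : fieldType) m (k : {poly %/ xm1 F m} -> {poly %/ xm1 F m}) (x y : {poly %/ xm1 F m}) :
  k 0 = 0 -> (forall z, k (k z) = z) -> y = k x -> (y = 0 <-> x = 0).
Proof.
move=> k0 kk ->; split; last by move=> ->.
by move=> H; rewrite -(kk x) H.
Qed.

Lemma partB (F : fieldType) (q m : nat) (g1 g2 v1 v2 : {poly F}) :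
    finv (fun a : F => a ^+ q) -> (0 < m)%N ->
    g1 \is monic -> g1 %| xm1 F m -> g2 \is monic -> g2 %| xm1 F m ->
    let h1 := xm1 F m %/ g1 in let h2 := xm1 F m %/ g2 in
    self_orthogonal m (herm_ip q m) (qc_code m g1 (v1 * g1) (v2 * g2) g2) <->
    [/\ rdvd m (frobq q h1) (rbar m g1 * (1 + frobq q v1 * rbar m v1)),
        rdvd m (frobq q h1) (rbar m g2 * (rbar m v2 + frobq q v1)) &
        rdvd m (frobq q h2) (rbar m g2 * (frobq q v2 * rbar m v2 + 1))].
Proof.
move=> hf m0 g1m g1d g2m g2d h1 h2.
set f := (fun a : F => a ^+ q) in hf.
have sD : forall z w : {poly %/ xm1 F m}, sigQ f (z + w) = sigQ f z + sigQ f w by move=> z w; apply: sigQD.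
have sM : forall z w : {poly %/ xm1 F m}, sigQ f (z * w) = sigQ f z * sigQ f w by move=> z w; apply: sigQM.
have s1 : sigQ f (1 : {poly %/ xm1 F m}) = 1 by apply: sigQ1.
have s0 : sigQ f (0 : {poly %/ xm1 F m}) = 0 by apply: sigQ0.
have sK : forall z : {poly %/ xm1 F m}, sigQ f (sigQ f z) = z by move=> z; apply: sigQK.
have bD : forall z w : {poly %/ xm1 F m}, barQ (z + w) = barQ z + barQ w by move=> z w; apply: barQD.
have bM : forall z w : {poly %/ xm1 F m}, barQ (z * w) = barQ z * barQ w by move=> z w; apply: barQM.
have b1 : barQ (1 : {poly %/ xm1 F m}) = 1 by apply: barQ1.
have b0 : barQ (0 : {poly %/ xm1 F m}) = 0 by apply: barQ0.
have bK : forall z : {poly %/ xm1 F m}, barQ (barQ z) = z by move=> z; apply: barQK.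
have bs : forall z : {poly %/ xm1 F m}, barQ (sigQ f z) = sigQ f (barQ z) by move=> z; apply: barQ_sigQ.
have sp : forall p, pi m (map_poly f p) = sigQ f (pi m p) by move=> p; symmetry; apply: sigQ_pi.
have bp : forall p, pi m (rbar m p) = barQ (pi m p) by move=> p; symmetry; apply: barQ_pi.
have fnz : forall g : {poly F}, g \is monic -> map_poly f g != 0.
  move=> g gm; apply/eqP => H; move: (monic_neq0 gm); rewrite -(mapK g hf) H.
  by rewrite (_ : map_poly f 0 = 0) ?eqxx //; apply/polyP => i; rewrite mcoef // coef0 finv0.
have hg : forall g, g %| xm1 F m -> map_poly f (xm1 F m %/ g) * map_poly f g = xm1 F m.
  by move=> g gd; rewrite -mapM // divpK // map_xm1.
have t1 : barQ (sigQ f (1 : {poly %/ xm1 F m})) = 1 by rewrite s1 b1.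
have t0 : barQ (sigQ f (0 : {poly %/ xm1 F m})) = 0 by rewrite s0 b0.
have Hip : forall A B C D, herm_ip q m (vec m A, vec m B) (vec m C, vec m D) =
     (((barQ (sigQ f (pi m A)) * pi m C + barQ (sigQ f (pi m B)) * pi m D) : {poly %/ xm1 F m}) : {poly F})`_0.
  move=> A B C D; rewrite /herm_ip; cbn [fst snd].
  have E : forall (z : {poly %/ xm1 F m}) i, (z : {poly F})`_i ^+ q = (sigQ f z : {poly F})`_i.
    by move=> z i; rewrite val_sigQ // mcoef.
  under eq_bigr do rewrite !vecE // E.
  under [X in _ + X]eq_bigr do rewrite !vecE // E.
  by rewrite !L1 // qvalD coefD.
rewrite (@gen_so F m (herm_ip q m) (fun z => barQ (sigQ f z))
   (fun A B C D => barQ (sigQ f A) * C + barQ (sigQ f B) * D) _ _ _ _ m0 t1 t0 Hip); last first.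
  move=> r1 r2 t3 t4; rewrite /= !(sD, sM, bD, bM); ring.
apply: fin4.
- rewrite /frobq (dvd_tr _ m0 (fnz g1 g1m) (hg g1 g1d)) /= !(piM, piD, pi1) !sp !bp.
  apply: (injQ s0 sK).
  by rewrite !(sD, sM, bD, bM, bs, sK, s1); ring.
- rewrite /frobq (dvd_tr _ m0 (fnz g1 g1m) (hg g1 g1d)) /= !(piM, piD, pi1) !sp !bp.
  apply: (injQ s0 sK).
  by rewrite !(sD, sM, bD, bM, bs, sK, s1); ring.
- rewrite /frobq (dvd_tr _ m0 (fnz g2 g2m) (hg g2 g2d)) /= !(piM, piD, pi1) !sp !bp.
  apply: (injQ s0 sK).
  by rewrite !(sD, sM, bD, bM, bs, sK, s1); ring.
- rewrite /= => H.
  apply: (proj2 (@injQ F m (fun z => barQ (sigQ f z)) _ _ t0 _ _) H).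
    by move=> z; rewrite -bs sK bK.
  by rewrite /= !piM !(sD, sM, bD, bM, bs, sK, bK); ring.
Qed.

Lemma finv_frob (F : finFieldType) (q : nat) : #|F| = (q ^ 2)%N -> finv (fun a : F => a ^+ q).
Proof.
move=> cF; have [p pp pc] := finPcharP F.
have pg : p.-nat #|F|.
  by rewrite -cardsT -pgroupE; apply: abelem_pgroup; apply: fin_ring_pchar_abelem.
have qn : [pchar F].-nat q.
  rewrite (eq_pnat _ (pcharf_eq pc)); apply: (pnat_dvd _ pg).
  by rewrite cF expnS expn1 dvdn_mulr.
split.
- by move=> a b; rewrite exprDn_pchar.
- by move=> a b; rewrite exprMn.
- by rewrite expr1n.
- by move=> a; rewrite -exprM mulnn -cF expf_card.
Qed.

Theorem mainTheorem4 :
  (* (A) Euclidean, over F_q *)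
  (forall (F : finFieldType) (m : nat) (g1 g2 v1 v2 : {poly F}),
    (0 < m)%N ->
    g1 \is monic -> g1 %| xm1 F m -> g2 \is monic -> g2 %| xm1 F m ->
    (size v1 <= m)%N -> (size v2 <= m)%N ->
    coprimep (rep m (v1 * v2 - 1)) (xm1 F m) ->
    let h1 := xm1 F m %/ g1 in let h2 := xm1 F m %/ g2 in
    self_orthogonal m (euclid_ip m) (qc_code m g1 (v1 * g1) (v2 * g2) g2) <->
    [/\ rdvd m h1 (rbar m g1 * (1 + v1 * rbar m v1)),
        rdvd m h1 (rbar m g2 * (rbar m v2 + v1)) &
        rdvd m h2 (rbar m g2 * (1 + v2 * rbar m v2))]) /\
  (* (B) Hermitian, over F_{q^2} *)
  (forall (F : finFieldType) (q m : nat) (g1 g2 v1 v2 : {poly F}),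
    #|F| = (q ^ 2)%N -> (0 < m)%N ->
    g1 \is monic -> g1 %| xm1 F m -> g2 \is monic -> g2 %| xm1 F m ->
    (size v1 <= m)%N -> (size v2 <= m)%N ->
    coprimep (rep m (v1 * v2 - 1)) (xm1 F m) ->
    let h1 := xm1 F m %/ g1 in let h2 := xm1 F m %/ g2 in
    self_orthogonal m (herm_ip q m) (qc_code m g1 (v1 * g1) (v2 * g2) g2) <->
    [/\ rdvd m (frobq q h1) (rbar m g1 * (1 + frobq q v1 * rbar m v1)),
        rdvd m (frobq q h1) (rbar m g2 * (rbar m v2 + frobq q v1)) &
        rdvd m (frobq q h2) (rbar m g2 * (frobq q v2 * rbar m v2 + 1))]) /\
  (* (C) symplectic, over F_q *)
  (forall (F : finFieldType) (m : nat) (g1 g2 v1 v2 : {poly F}),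
    (0 < m)%N ->
    g1 \is monic -> g1 %| xm1 F m -> g2 \is monic -> g2 %| xm1 F m ->
    (size v1 <= m)%N -> (size v2 <= m)%N ->
    coprimep (rep m (v1 * v2 - 1)) (xm1 F m) ->
    let h1 := xm1 F m %/ g1 in let h2 := xm1 F m %/ g2 in
    self_orthogonal m (symp_ip m) (qc_code m g1 (v1 * g1) (v2 * g2) g2) <->
    [/\ rdvd m h1 (rbar m g1 * (rbar m v1 - v1)),
        rdvd m h1 (rbar m g2 * (1 - rbar m v2 * v1)) &
        rdvd m h2 (rbar m g2 * (v2 - rbar m v2))]).
Proof.
split; [|split].
- by move=> F m g1 g2 v1 v2 m0 g1m g1d g2m g2d _ _ _; apply: partA.
- move=> F q m g1 g2 v1 v2 cF m0 g1m g1d g2m g2d _ _ _.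
  by apply: partB => //; apply: finv_frob.
- by move=> F m g1 g2 v1 v2 m0 g1m g1d g2m g2d _ _ _; apply: partC.
Qed.
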